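(* Let $\Sigma=(I,X,\mathcal U,\phi,Y,h)$ be a forward complete control system with outputs. Then the following are equivalent: (1) $\Sigma$ is IOS and OL; (2) $\Sigma$ is OUAG, OL, and $h$ is $\mathcal K$-bounded; (3) $\Sigma$ is OULIM, OL, and $h$ is $\mathcal K$-bounded.
   Context: Let $I\in\{\mathbb N_0,\mathbb R_0^+\}$. A forward complete control system with outputs $\Sigma=(I,X,\mathcal U,\phi,Y,h)$ consists of: a normed space $(X,\|\cdot\|_X)$; a vector space $U$ and a normed linear subspace $(\mathcal U,\|\cdot\|_{\mathcal U})$ of $\{u:I\to U\}$ such that for all $u\in\mathcal U,\tau\in I$, $u(\cdot+\tau)\in\mathcal U$ with $\|u(\cdot+\tau)\|_{\mathcal U}\le\|u\|_{\mathcal U}$, and for $t_2\ge t_1\ge 0$ the function $u|_{[t_1,t_2]}$ ($u$ on $[t_1,t_2]$, $0$ elsewhere) lies in $\mathcal U$ with norm $\le\|u\|_{\mathcal U}$; a map $\phi:I\times X\times\mathcal U\to X$ with $\phi(0,x,u)=x$, causality (if $u,\tilde u$ agree on $[0,t]$ then $\phi(t,x,u)=\phi(t,x,\tilde u)$), and cocycle property $\phi(t+s,x,u)=\phi(s,\phi(t,x,u),u(t+\cdot))$; a normed space $Y$ and $h:X\times U\to Y$. Write $y(t,x,u)=h(\phi(t,x,u),u(t))$, $B_r=\{x:\|x\|_X<r\}$, $B_{r,\mathcal U}=\{u:\|u\|_{\mathcal U}<r\}$. $\mathcal K,\mathcal K_\infty,\mathcal{KL}$ are the standard comparison function classes. IOS: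 $\exists\beta\in\mathcal{KL},\gamma\in\mathcal K_\infty$ with $\|y(t,x,u)\|_Y\le\beta(\|x\|_X,t)+\gamma(\|u\|_{\mathcal U})$ for all $x\in X,u\in\mathcal U,t\in I$. OL: $\exists\sigma,\gamma\in\mathcal K_\infty$ with $\|y(t,x,u)\|_Y\le\sigma(\|y(0,x,u)\|_Y)+\gamma(\|u\|_{\mathcal U})$ for all $x,u,t$. OUAG: $\exists\gamma\in\mathcal K_\infty$ such that for all $\varepsilon,r,s>0$ there is $\tau\in I$ with $\|y(t,x,u)\|_Y\le\varepsilon+\gamma(\|u\|_{\mathcal U})$ for all $x\in B_r,u\in B_{s,\mathcal U},t\ge\tau$. OULIM: $\exists\gamma\in\mathcal K_\infty$ such that for all $\varepsilon,r,s>0$ there is $\tau\in I$ such that for all $x\in B_r,u\in B_{s,\mathcal U}$ there exists $t\in I$, $t\le\tau$, with $\|y(t,x,u)\|_Y\le\varepsilon+\gamma(\|u\|_{\mathcal U})$. $h$ is $\mathcal K$-bounded: there exist $\sigma_1,\gamma_1\in\mathcal K$ with $\|h(x,u(0))\|_Y\le\sigma_1(\|x\|_X)+\gamma_1(\|u\|_{\mathcal U})$ for all $x\in X$, $u\in\mathcal U$. *)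

(* Defs.v *)
From HB Require Import structures.
From mathcomp Require Import all_boot all_order all_algebra.
From mathcomp Require Import all_classical all_reals all_analysis.
Set Implicit Arguments. Unset Strict Implicit. Unset Printing Implicit Defensive.
Import Order.TTheory GRing.Theory Num.Theory.
Import numFieldNormedType.Exports.
Local Open Scope classical_set_scope.
Local Open Scope ring_scope.

(** Time domain I : either N_0 (Discrete) or R_0^+ (Continuous),
    realised as a subtype of R. *)
Inductive timekind := Discrete | Continuous.

Definition timeset {R : realType} (k : timekind) (t : R) : bool :=
  match k with Discrete => t \is a Num.nat | Continuous => 0 <= t end.

Definition time (R : realType) (k : timekind) := {t : R | timeset k t}.

Lemma timeset0 (R : realType) k : timeset k (0 : R).
Proof. by case: k => //=; rewrite rpred0. Qed.

Lemma timesetD (R : realType) k (s t : R) :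
  timeset k s -> timeset k t -> timeset k (s + t).
Proof. by case: k => /= hs ht; [exact: rpredD | exact: addr_ge0]. Qed.

Definition tzero (R : realType) k : time R k := exist _ 0 (timeset0 R k).
Definition tadd (R : realType) k (s t : time R k) : time R k :=
  exist _ (sval s + sval t) (timesetD (svalP s) (svalP t)).

(** Comparison functions (on R_0^+, functions R -> R whose values off
    [0,+oo) are irrelevant). *)
Definition classK (R : realType) (g : R -> R) : Prop :=
  {within [set x : R | 0 <= x], continuous g} /\ g 0 = 0 /\
  (forall x y : R, 0 <= x -> x < y -> g x < g y).

Definition classKinf (R : realType) (g : R -> R) : Prop :=
  classK g /\ (forall M : R, exists r : R, 0 <= r /\ M < g r).

Definition classKL (R : realType) (b : R -> R -> R) : Prop :=
  {within [set p : R * R | 0 <= p.1 /\ 0 <= p.2], continuous (fun p => b p.1 p.2)} /\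
  (forall t : R, 0 <= t -> classK (fun r => b r t)) /\
  (forall r : R, 0 < r ->
     (forall t1 t2 : R, 0 <= t1 -> t1 < t2 -> b r t2 < b r t1) /\
     (b r t @[t --> +oo] --> 0)).

(** Forward complete control system with outputs
    Sigma = (I, X, Uc, phi, Y, h). The input space Uc is a normed linear
    subspace [Uset] (with norm [unorm]) of the functions I -> U. *)
Record ctrl_sys (R : realType) (k : timekind) (X : normedModType R)
    (U : lmodType R) (Y : normedModType R) := CtrlSys {
  Uset : set (time R k -> U);
  unorm : (time R k -> U) -> R;
  phi : time R k -> X -> (time R k -> U) -> X;
  h : X -> U -> Y;
  Uset0 : Uset (fun _ => 0);
  UsetD : forall u v, Uset u -> Uset v -> Uset (fun t => u t + v t);
  UsetZ : forall (a : R) u, Uset u -> Uset (fun t => a *: u t);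
  unorm_ge0 : forall u, Uset u -> 0 <= unorm u;
  unorm_eq0 : forall u, Uset u -> unorm u = 0 -> u = (fun _ => 0);
  unorm0 : unorm (fun _ => 0) = 0;
  unormD : forall u v, Uset u -> Uset v ->
    unorm (fun t => u t + v t) <= unorm u + unorm v;
  unormZ : forall (a : R) u, Uset u -> unorm (fun t => a *: u t) = `|a| * unorm u;
  Uset_shift : forall u (tau : time R k), Uset u ->
    Uset (fun s => u (tadd s tau)) /\ unorm (fun s => u (tadd s tau)) <= unorm u;
  Uset_restr : forall u (t1 t2 : time R k), Uset u -> sval t1 <= sval t2 ->
    let w := fun s : time R k =>
      if (sval t1 <= sval s) && (sval s <= sval t2) then u s else 0 in
    Uset w /\ unorm w <= unorm u;
  phi_id : forall x u, Uset u -> phi (tzero R k) x u = x;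
  phi_causal : forall t x u v, Uset u -> Uset v ->
    (forall s : time R k, sval s <= sval t -> u s = v s) ->
    phi t x u = phi t x v;
  phi_cocycle : forall t s x u, Uset u ->
    phi (tadd t s) x u = phi s (phi t x u) (fun r => u (tadd t r))
}.

Section Props.
Variables (R : realType) (k : timekind) (X : normedModType R)
  (U : lmodType R) (Y : normedModType R) (S : ctrl_sys k X U Y).

Definition yout (t : time R k) (x : X) (u : time R k -> U) : Y :=
  h S (phi S t x u) (u t).

Definition IOS : Prop :=
  exists (beta : R -> R -> R) (gamma : R -> R), classKL beta /\ classKinf gamma /\
  forall x u (t : time R k), Uset S u ->
    `|yout t x u| <= beta `|x| (sval t) + gamma (unorm S u).

Definition OL : Prop :=
  exists sigma gamma : R -> R, classKinf sigma /\ classKinf gamma /\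
  forall x u (t : time R k), Uset S u ->
    `|yout t x u| <= sigma `|yout (tzero R k) x u| + gamma (unorm S u).

Definition OUAG : Prop :=
  exists gamma : R -> R, classKinf gamma /\
  forall eps r s : R, 0 < eps -> 0 < r -> 0 < s ->
  exists tau : time R k,
  forall x u (t : time R k), `|x| < r -> Uset S u -> unorm S u < s ->
    sval tau <= sval t -> `|yout t x u| <= eps + gamma (unorm S u).

Definition OULIM : Prop :=
  exists gamma : R -> R, classKinf gamma /\
  forall eps r s : R, 0 < eps -> 0 < r -> 0 < s ->
  exists tau : time R k,
  forall x u, `|x| < r -> Uset S u -> unorm S u < s ->
  exists t : time R k, sval t <= sval tau /\
    `|yout t x u| <= eps + gamma (unorm S u).

Definition h_Kbounded : Prop :=
  exists sigma1 gamma1 : R -> R, classK sigma1 /\ classK gamma1 /\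
  forall x u, Uset S u ->
    `|h S x (u (tzero R k))| <= sigma1 `|x| + gamma1 (unorm S u).

End Props.

(* Main.v *)
Require Import Defs.
From HB Require Import structures.
From mathcomp Require Import all_boot all_order all_algebra.
From mathcomp Require Import all_classical all_reals all_analysis.
From mathcomp Require Import lra.
Set Implicit Arguments. Unset Strict Implicit. Unset Printing Implicit Defensive.
Import Order.TTheory GRing.Theory Num.Theory.
Import numFieldNormedType.Exports.
Local Open Scope classical_set_scope.
Local Open Scope ring_scope.

Section S.
Variable R : realType.
Implicit Types (g : R -> R).

Lemma K_ge0 g x : classK g -> 0 <= x -> 0 <= g x.
Proof.
move=> [_ [g0 gi]] x0; rewrite le_eqVlt in x0; case/orP: x0 => [/eqP<-|x0].
  by rewrite g0.
by rewrite -g0 ltW // gi.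
Qed.

Lemma K_le g x y : classK g -> 0 <= x -> x <= y -> g x <= g y.
Proof.
move=> [_ [g0 gi]] x0; rewrite le_eqVlt => /orP[/eqP->//|xy].
by rewrite ltW // gi.
Qed.

Lemma withinP (A : set R) (f : R -> R) :
  {within A, continuous f} <-> forall x, A x -> forall e, 0 < e ->
    exists2 d, 0 < d & forall y, A y -> `|x - y| < d -> `|f x - f y| < e.
Proof.
rewrite subspace_continuousP; split.
- move=> H x Ax e e0; have := H x Ax; move/cvgrPdist_lt => /(_ e e0).
  move=> /nbhs_ballP [d d0 Hd]; exists d => // y Ay xy.
  apply: (Hd y) => //; by rewrite -ball_normE /=.
- move=> H x Ax; apply/cvgrPdist_lt => e e0.
  have [d d0 Hd] := H x Ax e e0.
  apply/nbhs_ballP; exists d => // y.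
  rewrite -ball_normE /= => xy Ay; exact: Hd.
Qed.
End S.

Section S.
Variable R : realType.
Implicit Types (f g : R -> R).

Lemma K_comp f g : classK f -> classK g -> classK (fun x => f (g x)).
Proof.
move=> Kf Kg; have [cf [f0 fi]] := Kf; have [cg [g0 gi]] := Kg.
split; last split.
- apply/withinP => x /= x0 e e0.
  have [d1 d10 H1] := (withinP _ _).1 cf (g x) (K_ge0 Kg x0) e e0.
  have [d2 d20 H2] := (withinP _ _).1 cg x x0 d1 d10.
  exists d2 => // y /= y0 xy; apply: H1; first exact: K_ge0.
  exact: H2.
- by rewrite g0 f0.
- move=> x y x0 xy; apply: fi; first exact: K_ge0.
  exact: gi.
Qed.

Lemma K_add f g : classK f -> classK g -> classK (fun x => f x + g x).
Proof.
move=> Kf Kg; have [cf [f0 fi]] := Kf; have [cg [g0 gi]] := Kg.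
split; last split.
- apply/withinP => x /= x0 e e0.
  have e20 : 0 < e / 2 by rewrite divr_gt0.
  have [d1 d10 H1] := (withinP _ _).1 cf x x0 _ e20.
  have [d2 d20 H2] := (withinP _ _).1 cg x x0 _ e20.
  exists (Num.min d1 d2); first by rewrite lt_min d10 d20.
  move=> y y0; rewrite lt_min => /andP[h1 h2].
  have := H1 y y0 h1; have := H2 y y0 h2.
  rewrite opprD addrACA => a b.
  apply: (le_lt_trans (ler_normD _ _)); lra.
- by rewrite f0 g0 addr0.
- by move=> x y x0 xy; apply: ltrD; [exact: fi|exact: gi].
Qed.

Lemma K_scale c f : 0 < c -> classK f -> classK (fun x => c * f x).
Proof.
move=> c0 Kf; have [cf [f0 fi]] := Kf.
split; last split.
- apply/withinP => x /= x0 e e0.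
  have ec0 : 0 < e / c by rewrite divr_gt0.
  have [d1 d10 H1] := (withinP _ _).1 cf x x0 _ ec0.
  exists d1 => // y y0 xy; have := H1 y y0 xy.
  rewrite -mulrBr normrM gtr0_norm // => h.
  by rewrite -ltr_pdivlMl // mulrC.
- by rewrite f0 mulr0.
- by move=> x y x0 xy; rewrite ltr_pM2l //; exact: fi.
Qed.

Lemma K_cont g : continuous g -> g 0 = 0 ->
  (forall x y, 0 <= x -> x < y -> g x < g y) -> classK g.
Proof. by move=> cg g0 gi; split => //; exact: continuous_subspaceT. Qed.

Lemma K_id : classK (fun x : R => x).
Proof. by apply: K_cont => // x; exact: cvg_id. Qed.

Lemma K_sqrt : classK (@Num.sqrt R).
Proof.
apply: K_cont; [exact: sqrt_continuous | exact: sqrtr0 |].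
move=> x y x0 xy; rewrite ltr_sqrt //; exact: le_lt_trans xy.
Qed.

Lemma K_sq : classK (fun x : R => x ^+ 2).
Proof.
apply: K_cont; [exact: exprn_continuous | by rewrite expr0n |].
move=> x y x0 xy; rewrite ltr_pXn2r // ?nnegrE //; exact: (ltW (le_lt_trans x0 xy)).
Qed.

Lemma Kinf_K f : classKinf f -> classK f. Proof. by case. Qed.

Lemma Kinf_add f g : classKinf f -> classK g -> classKinf (fun x => f x + g x).
Proof.
move=> [Kf uf] Kg; split; first exact: K_add.
move=> M; have [r [r0 Mr]] := uf M; exists r; split => //.
have := K_ge0 Kg r0; lra.
Qed.

Lemma Kinf_add2 f g : classK f -> classKinf g -> classKinf (fun x => f x + g x).
Proof.
move=> Kf [Kg ug]; split; first exact: K_add.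
move=> M; have [r [r0 Mr]] := ug M; exists r; split => //.
have := K_ge0 Kf r0; lra.
Qed.

Lemma Kinf_comp f g : classKinf f -> classKinf g -> classKinf (fun x => f (g x)).
Proof.
move=> [Kf uf] [Kg ug]; split; first exact: K_comp.
move=> M; have [r1 [r10 Mr1]] := uf M; have [r2 [r20 Mr2]] := ug r1.
exists r2; split => //; apply: (lt_trans Mr1); case: Kf => _ [_]; apply => //.
Qed.

Lemma Kinf_scale c f : 0 < c -> classKinf f -> classKinf (fun x => c * f x).
Proof.
move=> c0 [Kf uf]; split; first exact: K_scale.
move=> M; have [r [r0 Mr]] := uf (M / c); exists r; split => //.
by rewrite -ltr_pdivrMl // mulrC.
Qed.
End S.

Section W.
Variable R : realType.
Variable T : nat -> R.

Definition gfun (n : nat) (t : R) : R :=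
  Num.max 0 (Num.min (n.+1%:R^-1) (T n.+1 + n.+1%:R^-1 - t)).

Lemma inv_pos n : 0 < (n.+1%:R : R)^-1.
Proof. by rewrite invr_gt0 ltr0n. Qed.

Lemma inv_le1 n : (n.+1%:R : R)^-1 <= 1.
Proof. by rewrite invf_le1 ?ler1n ?ltr0n. Qed.

Lemma gfun_ge0 n t : 0 <= gfun n t.
Proof. by rewrite /gfun le_max lexx. Qed.

Lemma gfun_le n t : gfun n t <= n.+1%:R^-1.
Proof.
rewrite /gfun ge_max (ltW (inv_pos n)) /=.
by rewrite ge_min lexx.
Qed.

Lemma gfun_lip n t t' : gfun n t <= gfun n t' + `|t - t'|.
Proof.
rewrite /gfun; set a := (n.+1%:R^-1 : R); set b := T n.+1 + a.
have h1 := ler_norm (t - t'); have h2 := ler_norm (t' - t).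
rewrite distrC in h2.
have h0 : 0 <= `|t - t'| by [].
case: (leP a (b - t)) => h3; case: (leP a (b - t')) => h4;
case: (leP 0 a) => h5; try case: (leP 0 (b - t)) => h6;
try case: (leP 0 (b - t')) => h7; lra.
Qed.

Lemma gfun_mono n t t' : t <= t' -> gfun n t' <= gfun n t.
Proof.
move=> tt; rewrite /gfun; set a := (n.+1%:R^-1 : R); set b := T n.+1 + a.
case: (leP a (b - t)) => h3; case: (leP a (b - t')) => h4;
case: (leP 0 a) => h5; try case: (leP 0 (b - t)) => h6;
try case: (leP 0 (b - t')) => h7; lra.
Qed.

Lemma gfun_big n t : t <= T n.+1 -> gfun n t = n.+1%:R^-1.
Proof.
move=> h; rewrite /gfun; have := inv_pos n; set a := (n.+1%:R^-1 : R) => a0.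
have -> : Num.min a (T n.+1 + a - t) = a.
  by apply/min_idPl; lra.
by apply/max_idPr; lra.
Qed.

Lemma gfun_zero n t : T n.+1 + n.+1%:R^-1 <= t -> gfun n t = 0.
Proof.
move=> h; rewrite /gfun; have := inv_pos n; set a := (n.+1%:R^-1 : R) => a0.
apply/max_idPl; rewrite ge_min; apply/orP; right; move: h; rewrite -/a; lra.
Qed.

Definition Wf (t : R) : R := sup (range (fun n => gfun n t)).

Lemma W_hasub t : has_ubound (range (fun n => gfun n t)).
Proof.
exists 1 => _ [n _ <-]; exact: le_trans (gfun_le n t) (inv_le1 n).
Qed.

Lemma W_ge n t : gfun n t <= Wf t.
Proof. by apply: ub_le_sup; [exact: W_hasub | exists n]. Qed.

Lemma W_le t c : (forall n, gfun n t <= c) -> Wf t <= c.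
Proof.
move=> H; apply: ge_sup; first by exists (gfun 0 t), 0%N.
by move=> _ [n _ <-].
Qed.

Lemma W_ge0 t : 0 <= Wf t.
Proof. exact: le_trans (gfun_ge0 0 t) (W_ge 0 t). Qed.

Lemma W_le1 t : Wf t <= 1.
Proof. apply: W_le => n; exact: le_trans (gfun_le n t) (inv_le1 n). Qed.

Lemma W_lip t t' : Wf t <= Wf t' + `|t - t'|.
Proof.
apply: W_le => n; apply: le_trans (gfun_lip n t t') _.
by rewrite lerD2r W_ge.
Qed.

Lemma W_mono t t' : t <= t' -> Wf t' <= Wf t.
Proof.
move=> h; apply: W_le => n; exact: le_trans (gfun_mono n h) (W_ge n t).
Qed.

Lemma W_cont : continuous Wf.
Proof.
move=> x; apply/cvgrPdist_lt => e e0.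
apply/nbhs_ballP; exists e => // y /= xy.
have h1 := W_lip x y; have h2 := W_lip y x; rewrite distrC in h2.
have : `|Wf x - Wf y| <= `|x - y|.
  by rewrite ler_norml; apply/andP; split; lra.
move=> h; exact: le_lt_trans h xy.
Qed.

Lemma W_lim e : 0 < e -> exists M, forall t, M <= t -> Wf t <= e.
Proof.
move=> e0.
have [N HN] : exists N : nat, (N.+1%:R : R)^-1 <= e.
  have [N HN] := ltr_add_invr e0; exists N; rewrite add0r in HN; exact: ltW.
have [M HM] : exists M, forall n, (n < N)%N -> forall t, M <= t -> gfun n t = 0.
  elim: N {HN} => [|N [M HM]]; first by exists 0.
  exists (Num.max M (T N.+1 + N.+1%:R^-1)) => n; rewrite ltnS leq_eqVlt.
  case/orP => [/eqP -> | hn] t; rewrite ge_max => /andP[h1 h2].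
    exact: gfun_zero.
  exact: HM.
exists M => t tM; apply: W_le => n.
case: (ltnP n N) => hn; first by rewrite (HM n hn t tM) ltW.
apply: le_trans (gfun_le n t) _; apply: le_trans HN.
by rewrite lef_pV2 ?posrE ?ltr0n // ler_nat.
Qed.
End W.

Section O.
Variable R : realType.
Variable T : nat -> R.

Definition omg (t : R) : R := Wf T t + (1 + `|t|)^-1.

Lemma omg_cont : continuous omg.
Proof.
move=> x; apply: cvgD; first exact: W_cont.
apply: cvgV; first by rewrite gt_eqF // ltr_pwDl.
apply: cvgD; first exact: cvg_cst.
exact: norm_continuous.
Qed.

Lemma omg_pos t : 0 < omg t.
Proof.
rewrite /omg; have := W_ge0 T t; have : 0 < (1 + `|t|)^-1.
  by rewrite invr_gt0 ltr_pwDl.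
lra.
Qed.

Lemma omg_strict t1 t2 : 0 <= t1 -> t1 < t2 -> omg t2 < omg t1.
Proof.
move=> t10 t12; rewrite /omg; apply: ler_ltD; first exact/W_mono/ltW.
have t20 : 0 <= t2 by exact: ltW (le_lt_trans t10 t12).
rewrite ger0_norm // ger0_norm //.
rewrite ltf_pV2 ?posrE; first by rewrite ltrD2l.
  all: lra.
Qed.

Lemma omg_ge n t : t <= T n.+1 -> n.+1%:R^-1 <= omg t.
Proof.
move=> h; rewrite /omg; have := W_ge T n t; rewrite gfun_big //.
have : 0 < (1 + `|t|)^-1 by rewrite invr_gt0 ltr_pwDl.
move=> h1 h2; apply: le_trans h2 _; rewrite lerDl; exact: ltW.
Qed.

Lemma omg_lim e : 0 < e -> exists M, forall t, M <= t -> omg t <= e.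
Proof.
move=> e0; have e20 : 0 < e / 2 by rewrite divr_gt0.
have [M HM] := W_lim T e20.
exists (Num.max M (2 / e)) => t; rewrite ge_max => /andP[h1 h2].
have := HM t h1.
have : (1 + `|t|)^-1 <= e / 2.
  have t0 : 0 < t by apply: lt_le_trans h2; rewrite divr_gt0.
  rewrite gtr0_norm // -[e / 2]invf_div lef_pV2 ?posrE ?ltr_pwDl ?divr_gt0 //.
  - by apply: le_trans h2 _; rewrite lerDr.
  - exact: ltW.
rewrite /omg; move: (Wf T t) ((1 + `|t|)^-1) => a b; lra.
Qed.

Lemma omg_to0 : omg t @[t --> +oo] --> 0.
Proof.
apply/cvgrPdist_lt => e e0.
have e20 : 0 < e / 2 by rewrite divr_gt0.
have [M HM] := omg_lim e20.
exists M; split; first exact: num_real.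
move=> t Mt; rewrite sub0r normrN ger0_norm; last exact/ltW/omg_pos.
have := HM t (ltW Mt); lra.
Qed.

Lemma KL_prod (al : R -> R) : classK al -> classKL (fun r t => al r * omg t).
Proof.
move=> Ka; have [ca [a0 ai]] := Ka.
split; last split.
- apply/subspace_continuousP => p [p1 p2].
  apply: cvgM.
  + apply/cvgrPdist_lt => e e0.
    have [d d0 Hd] := (withinP _ _).1 ca p.1 p1 e e0.
    have Hf : (fun q : R * R => q.1) @ nbhs p --> p.1.
      exact: (@cvg_fst _ _ (nbhs p.1) (nbhs p.2) _).
    have H := (cvgrPdist_lt _ _).1 Hf d d0.
    rewrite /prop_near1 /within /=; apply: filterS (H _) => q hq [q1 _].
    exact: Hd.
  + apply: cvg_within_filter.
    apply: continuous_comp; last exact: omg_cont.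
    exact: cvg_snd.
- move=> t t0.
  have -> : (fun r => al r * omg t) = (fun r => omg t * al r).
    by apply: funext => r; rewrite mulrC.
  exact: K_scale (omg_pos t) Ka.
- move=> r r0; split.
  + move=> t1 t2 t10 t12; rewrite ltr_pM2l; first exact: omg_strict.
    by rewrite -a0; apply: ai.
  + rewrite -(mulr0 (al r)); apply: cvgMr; exact: omg_to0.
Qed.
End O.

Section T.
Variable R : realType.
Variable k : timekind.

Lemma timeset_nat (n : nat) : timeset k (n%:R : R).
Proof. by case: k => /=; [exact: natr_nat | exact: ler0n]. Qed.

Definition tnat (n : nat) : time R k := exist _ (n%:R) (timeset_nat n).

Lemma time_ge0 (t : time R k) : 0 <= sval t.
Proof.
case: t => t /=; case: k => /= h //.
by case/natrP: h => n ->; exact: ler0n.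
Qed.

Lemma timeset_sub (t t' : time R k) : sval t <= sval t' ->
  timeset k (sval t' - sval t).
Proof.
case: t t' => [t ht] [t' ht'] /=; case: k ht ht' => /= ht ht' h.
  move: ht ht' h => /natrP [m ->] /natrP [n ->] h.
  rewrite ler_nat in h; rewrite -natrB //; exact: natr_nat.
by rewrite subr_ge0.
Qed.

Definition tsub (t t' : time R k) (h : sval t <= sval t') : time R k :=
  exist _ (sval t' - sval t) (timeset_sub h).

Lemma tadd_tsub t t' (h : sval t <= sval t') : tadd t (tsub h) = t'.
Proof. by apply: val_inj => /=; rewrite addrC subrK. Qed.

Lemma taddC (t s : time R k) : tadd t s = tadd s t.
Proof. by apply: val_inj => /=; rewrite addrC. Qed.

Lemma tadd0 (t : time R k) : tadd t (tzero R k) = t.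
Proof. by apply: val_inj => /=; rewrite addr0. Qed.

End T.

Section K2.
Variable R : realType.
Implicit Types g : R -> R.

Lemma K_add2 g a b : classK g -> 0 <= a -> 0 <= b ->
  g (a + b) <= g (2 * a) + g (2 * b).
Proof.
move=> Kg a0 b0; have ga := K_ge0 Kg (_ : 0 <= 2 * a).
have gb := K_ge0 Kg (_ : 0 <= 2 * b).
case: (leP a b) => ab.
  apply: le_trans (_ : g (2 * b) <= _); last first.
    by rewrite lerDr; apply: ga; rewrite mulr_ge0.
  apply: K_le => //; [by rewrite addr_ge0 | lra].
apply: le_trans (_ : g (2 * a) <= _); last first.
  by rewrite lerDl; apply: gb; rewrite mulr_ge0.
apply: K_le => //; [by rewrite addr_ge0 | lra].
Qed.

Lemma K_small g e : classK g -> 0 < e -> exists2 d, 0 < d & g d <= e.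
Proof.
move=> Kg e0; have [cg [g0 _]] := Kg.
have [d d0 Hd] := (withinP _ _).1 cg 0 (lexx 0) e e0.
exists (d / 2); first by rewrite divr_gt0.
have h2 : 0 <= d / 2 by rewrite divr_ge0 // ltW.
have hd : `|0 - d / 2| < d by rewrite sub0r normrN ger0_norm //; lra.
have := Hd (d / 2) h2 hd; rewrite g0 sub0r normrN ger0_norm; first exact: ltW.
exact: K_ge0.
Qed.
End K2.

Section A.
Variables (R : realType) (k : timekind) (X : normedModType R)
  (U : lmodType R) (Y : normedModType R) (S : ctrl_sys k X U Y).

Lemma yout0 x u : Uset S u -> yout S (tzero R k) x u = h S x (u (tzero R k)).
Proof. by move=> Hu; rewrite /yout phi_id. Qed.

Lemma IOS_hK : IOS S -> h_Kbounded S.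
Proof.
move=> [beta [gamma [[_ [Kb _]] [[Kg _] H]]]].
exists (fun r => beta r 0), gamma; split; first exact: Kb.
split => // x u Hu; have := H x u (tzero R k) Hu; by rewrite yout0.
Qed.

Lemma IOS_OUAG : IOS S -> OUAG S.
Proof.
move=> [beta [gamma [[_ [Kb Lb]] [Kg H]]]].
exists gamma; split => // eps r s e0 r0 s0.
have [_ lim] := Lb r r0.
have [M [Mr HM]] := (cvgrPdist_lt _ _).1 lim eps e0.
pose n := Num.Def.archi_bound (Num.max M 0).
have Mn : M < n%:R.
  have h0 : 0 <= Num.max M 0 by rewrite le_max lexx orbT.
  apply: le_lt_trans (archi_boundP h0); by rewrite le_max lexx.
exists (@tnat R k n) => x u t xr Hu us tt.
apply: le_trans (H x u t Hu) _; rewrite lerD2r.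
have t0 := time_ge0 t.
have h1 : beta `|x| (sval t) <= beta r (sval t).
  by apply: (K_le (g := fun r => beta r (sval t))) => //; [exact: Kb | exact: ltW].
have hn := HM _ Mn; rewrite sub0r normrN in hn.
have h3 : beta r n%:R <= eps := ltW (le_lt_trans (ler_norm _) hn).
have h2 : beta r (sval t) <= beta r n%:R.
  move: tt; rewrite le_eqVlt => /orP[/eqP <- //|lt].
  have [dec _] := Lb r r0.
  by apply/ltW/dec => //; exact: ler0n.
exact: le_trans h1 (le_trans h2 h3).
Qed.

Lemma OUAG_OULIM : OUAG S -> OULIM S.
Proof.
move=> [gamma [Kg H]]; exists gamma; split => // eps r s e0 r0 s0.
have [tau Ht] := H eps r s e0 r0 s0; exists tau => x u xr Hu us.
exists tau; split => //; exact: Ht.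
Qed.
End A.

Section C.
Variables (R : realType) (k : timekind) (X : normedModType R)
  (U : lmodType R) (Y : normedModType R) (S : ctrl_sys k X U Y).

Lemma OULIM_IOS : OULIM S -> OL S -> h_Kbounded S -> IOS S.
Proof.
move=> [gL [KgL HL]] [sg [gO [Ksg [KgO HO]]]] [s1 [g1 [Ks1 [Kg1 H1]]]].
have Ksg' := Kinf_K Ksg; have KgO' := Kinf_K KgO; have KgL' := Kinf_K KgL.
have C1 : forall x u t, Uset S u -> `|yout S t x u| <=
    sg (2 * s1 `|x|) + sg (2 * g1 (unorm S u)) + gO (unorm S u).
  move=> x u t Hu; have u0 := unorm_ge0 Hu.
  apply: le_trans (HO x u t Hu) _; rewrite lerD2r yout0 //.
  have hb := H1 x u Hu.
  have e1 : sg `|h S x (u (tzero R k))| <= sg (s1 `|x| + g1 (unorm S u)).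
    exact: K_le Ksg' (normr_ge0 _) hb.
  have e2 := K_add2 Ksg' (K_ge0 Ks1 (normr_ge0 x)) (K_ge0 Kg1 u0).
  exact: le_trans e1 e2.
have C2 : forall eps r s, 0 < eps -> 0 < r -> 0 < s -> exists tau : time R k,
    forall x u t, `|x| < r -> Uset S u -> unorm S u < s -> sval tau <= sval t ->
    `|yout S t x u| <= sg (2 * eps) + sg (2 * gL (unorm S u)) + gO (unorm S u).
  move=> eps r s e0 r0 s0; have [tau Ht] := HL eps r s e0 r0 s0.
  exists tau => x u t xr Hu us tt.
  have [t0 [t0tau Hy0]] := Ht x u xr Hu us.
  have h01 : sval t0 <= sval t := le_trans t0tau tt.
  pose v := fun r0 => u (tadd t0 r0).
  have vE : v = (fun s => u (tadd s t0)) by apply: funext => r1; rewrite /v taddC.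
  have [Hv vu] : Uset S v /\ unorm S v <= unorm S u.
    by rewrite vE; exact: Uset_shift.
  have yE : yout S t x u = yout S (tsub h01) (phi S t0 x u) v.
    by rewrite /yout -[in LHS](tadd_tsub h01) phi_cocycle.
  have y0E : yout S (tzero R k) (phi S t0 x u) v = yout S t0 x u.
    by rewrite yout0 // /v tadd0.
  rewrite yE; apply: le_trans (HO _ v _ Hv) _; rewrite y0E.
  have u0 := unorm_ge0 Hu; have v0 := unorm_ge0 Hv.
  have e1 : gO (unorm S v) <= gO (unorm S u) := K_le KgO' v0 vu.
  have e2 : sg `|yout S t0 x u| <= sg (eps + gL (unorm S u)).
    exact: K_le Ksg' (normr_ge0 _) Hy0.
  have e3 := K_add2 Ksg' (ltW e0) (K_ge0 KgL' u0).
  move: e1 e2 e3; lra.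
have two : (0 : R) < 2 by [].
pose sh r := sg (2 * s1 r) + r.
have Ksh : classK sh := K_add (K_comp Ksg' (K_scale two Ks1)) (@K_id R).
pose al r := Num.sqrt (sh r) + (sh r) ^+ 2.
have Kal : classK al := K_add (K_comp (@K_sqrt R) Ksh) (K_comp (@K_sq R) Ksh).
pose gp s := 2 * gO s + sg (2 * g1 s) + sg (2 * gL s).
have Kgp : classKinf gp := Kinf_add (Kinf_add (Kinf_scale two KgO)
    (K_comp Ksg' (K_scale two Kg1))) (K_comp Ksg' (K_scale two KgL')).
have Bgen : forall x u t, Uset S u ->
    `|yout S t x u| - gp (unorm S u) <= sh `|x|.
  move=> x u t Hu; have hC1 := C1 x u t Hu; have u0 := unorm_ge0 Hu.
  have := K_ge0 KgO' u0; have := K_ge0 Ksg' (mulr_ge0 (ltW two) (K_ge0 KgL' u0)).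
  have := normr_ge0 x; rewrite /gp /sh; lra.
have Hbase : forall x u t, Uset S u ->
    `|yout S t x u| - gp (unorm S u) <= al `|x|.
  move=> x u t Hu; apply: le_trans (Bgen x u t Hu) _.
  have a0 : 0 <= sh `|x| := K_ge0 Ksh (normr_ge0 x).
  rewrite /al; move: (sh `|x|) a0 => a a0.
  have q0 := sqrtr_ge0 a; have qa := sqr_sqrtr a0.
  move: (Num.sqrt a) q0 qa => q q0 qa; rewrite -qa.
  case: (leP q 1) => q1; nra.
have Hn : forall n : nat, exists Tn : R, n%:R <= Tn /\ forall x u t, Uset S u ->
    Tn <= sval t -> `|yout S t x u| - gp (unorm S u) <= al `|x| * n.+1%:R^-1.
  move=> n.
  have c0 := inv_pos R n; have c1 := inv_le1 R n.
  have Nc : n.+1%:R * (n.+1%:R : R)^-1 = 1 by rewrite mulfV // pnatr_eq0.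
  have N0 : (0 : R) < n.+1%:R by rewrite ltr0n.
  move: (n.+1%:R : R)^-1 c0 c1 Nc => c c0 c1 Nc.
  have [d d0 Hd] := K_small Ksg' (exprn_gt0 2 c0).
  have [sr [sr0 Hsr]] := KgO.2 (n.+1%:R).
  have d20 : 0 < d / 2 by rewrite divr_gt0.
  have sr1 : 0 < sr + 1 by rewrite ltr_pwDr.
  have [tau Ht] := C2 (d / 2) (n.+1%:R) (sr + 1) d20 N0 sr1.
  exists (Num.max (sval tau) n%:R); split; first by rewrite le_max lexx orbT.
  move=> x u t Hu; rewrite ge_max => /andP[tt _].
  have hB := Bgen x u t Hu; have hC1 := C1 x u t Hu; have u0 := unorm_ge0 Hu.
  have x0 := normr_ge0 x.
  have a0 : 0 <= sh `|x| := K_ge0 Ksh (normr_ge0 x).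
  have hgL := K_ge0 Ksg' (mulr_ge0 (ltW two) (K_ge0 KgL' u0)).
  have hg1 := K_ge0 Ksg' (mulr_ge0 (ltW two) (K_ge0 Kg1 u0)).
  have hgO := K_ge0 KgO' u0.
  have xa : `|x| <= sh `|x|.
    rewrite /sh lerDr; exact: K_ge0 Ksg' (mulr_ge0 (ltW two) (K_ge0 Ks1 x0)).
  rewrite /al.
  have q0 := sqrtr_ge0 (sh `|x|); have qa := sqr_sqrtr a0.
  move: (Num.sqrt (sh `|x|)) q0 qa => q q0 qa.
  case: (leP (sh `|x|) (c ^+ 2)) => h1.
    have qc : q <= c by rewrite -(ler_pXn2r (_ : (0 < 2)%N)) ?nnegrE ?qa // ltW.
    nra.
  case: (leP (n.+1%:R) (sh `|x|)) => h2.
    nra.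
  have xN : `|x| < n.+1%:R := le_lt_trans xa h2.
  have cq : c <= q by rewrite -(ler_pXn2r (_ : (0 < 2)%N)) ?nnegrE ?qa // ?ltW.
  case: (leP (sr + 1) (unorm S u)) => h3.
    have : gO sr <= gO (unorm S u) by apply: K_le => //; lra.
    have hs : sg (2 * s1 `|x|) <= sh `|x| by rewrite /sh lerDl.
    have hp : 0 <= (q + sh `|x| ^+ 2) * c.
      apply: mulr_ge0; [apply: addr_ge0 => //; exact: sqr_ge0 | exact: ltW].
    move=> hO; rewrite /gp; lra.
  have hT := Ht x u t xN Hu h3 tt.
  have e2 : 2 * (d / 2) = d by rewrite mulrC -mulrA mulVf ?mulr1 // pnatr_eq0.
  rewrite e2 in hT.
  have hcq : c ^+ 2 <= q * c by rewrite expr2 ler_wpM2r // ltW.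
  have hp : 0 <= sh `|x| ^+ 2 * c.
    apply: mulr_ge0; [exact: sqr_ge0 | exact: ltW].
  move: hT; rewrite /gp mulrDl; lra.
have [Tf HT] := choice Hn.
exists (fun r t => al r * omg Tf t), gp; split; first exact: KL_prod Kal.
split => // x u t Hu.
suff : `|yout S t x u| - gp (unorm S u) <= al `|x| * omg Tf (sval t) by lra.
have al0 : 0 <= al `|x| := K_ge0 Kal (normr_ge0 x).
have main : forall m : nat, sval t < Tf m.+1 ->
    `|yout S t x u| - gp (unorm S u) <= al `|x| * omg Tf (sval t).
  elim => [|m IH] ht.
    apply: le_trans (Hbase x u t Hu) _.
    have := omg_ge (T := Tf) (n := 0) (ltW ht).
    rewrite invr1 => h1; rewrite -{1}(mulr1 (al `|x|)); exact: ler_wpM2l.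
  case: (ltP (sval t) (Tf m.+1)) => h; first exact: IH.
  apply: le_trans ((HT m.+1).2 x u t Hu h) _.
  apply: ler_wpM2l => //; exact: omg_ge (ltW ht).
pose m := Num.Def.archi_bound (sval t).
apply: (main m).
apply: lt_le_trans (archi_boundP (time_ge0 t)) _.
apply: le_trans (HT m.+1).1; rewrite ler_nat; exact: leqnSn.
Qed.
End C.

Theorem proposition2 (R : realType) (k : timekind) (X : normedModType R)
    (U : lmodType R) (Y : normedModType R) (S : ctrl_sys k X U Y) :
  [/\ (IOS S /\ OL S) <-> (OUAG S /\ OL S /\ h_Kbounded S),
      (OUAG S /\ OL S /\ h_Kbounded S) <-> (OULIM S /\ OL S /\ h_Kbounded S)
    & (IOS S /\ OL S) <-> (OULIM S /\ OL S /\ h_Kbounded S)].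
Proof.
split.
- split => [[hI hO]|[hA [hO hK]]].
    by split; [exact: IOS_OUAG | split => //; exact: IOS_hK].
  by split => //; apply: OULIM_IOS => //; exact: OUAG_OULIM.
- split => [[hA [hO hK]]|[hL [hO hK]]].
    by split => //; exact: OUAG_OULIM.
  have hI := OULIM_IOS hL hO hK.
  by split => //; exact: IOS_OUAG.
- split => [[hI hO]|[hL [hO hK]]].
    by split; [apply: OUAG_OULIM; exact: IOS_OUAG | split => //; exact: IOS_hK].
  by split => //; exact: OULIM_IOS.
Qed.
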